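(* For the symmetric two-user Gaussian broadcast channel with feedback with parameters $(\sigma_s^2,\rho_s,\sigma_z^2,\rho_z)$ and every $0<D\le\sigma_s^2$, let $D_{\mathrm{th}}=\frac{\sigma_s^2(2-\rho_z-|\rho_s|)}{2-\rho_z}$. Then $E(D)\le E_{\mathrm{OL}}(D)$ (indeed the minimal energy per source-pair sample required by the uncoded joint source-channel Ozarow–Leung-type linear feedback scheme is at most $E_{\mathrm{OL}}(D)$), where $$E_{\mathrm{OL}}(D)=\frac{2\sigma_z^2}{3-\rho_z}\log\!\Big(\frac{\sigma_s^2(1+|\rho_s|)}{D+(2-\rho_z)(D-\sigma_s^2)+\sigma_s^2|\rho_s|}\Big)\quad\text{if } D\ge D_{\mathrm{th}},$$ $$E_{\mathrm{OL}}(D)=2\sigma_z^2\Big(\log\!\Big(\frac{(2-\rho_z-|\rho_s|)\sigma_s^2}{(2-\rho_z)D}\Big)+\frac{1}{3-\rho_z}\log\!\Big(\frac{(2-\rho_z)(1+|\rho_s|)}{2-\rho_z-|\rho_s|}\Big)\Big)\quad\text{if } D<D_{\mathrm{th}},$$ with $\log$ the natural logarithm.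
   Context: Setup: An encoder observes $m$ i.i.d. pairs $(S_{1,j},S_{2,j})\sim\mathcal N(0,\mathsf Q_s)$, $j=1,\dots,m$, with $\mathsf Q_s=\sigma_s^2\begin{pmatrix}1&\rho_s\\\rho_s&1\end{pmatrix}$, $|\rho_s|<1$. The channel is used $n$ times; at time $k$, receiver $i\in\{1,2\}$ observes $Y_{i,k}=X_k+Z_{i,k}$, where the pairs $(Z_{1,k},Z_{2,k})\sim\mathcal N(0,\mathsf Q_z)$ are i.i.d. over $k$ and independent of the sources, $\mathsf Q_z=\sigma_z^2\begin{pmatrix}1&\rho_z\\\rho_z&1\end{pmatrix}$, $|\rho_z|<1$; all signals are real. The encoder has noiseless causal feedback of both outputs: $X_k=f_k(S_{1,1}^m,S_{2,1}^m,\mathbf Y_1,\dots,\mathbf Y_{k-1})$ with $\mathbf Y_k=(Y_{1,k},Y_{2,k})$. Receiver $i$ outputs $\hat S_{i,1}^m=g_i(Y_{i,1}^n)$. A $(D,E,m,n)$ code is a collection $\{f_k\}_{k=1}^n,g_1,g_2$ with $\sum_{j=1}^m\mathbb E[(S_{i,j}-\hat S_{i,j})^2]\le mD$ for $i=1,2$ and $\sum_{k=1}^n\mathbb E[X_k^2]\le mE$. The energy-distortion tradeoff $E(D)$ is the minimal $E$ such that for every $\epsilon>0$ there exist $m,n$ and a $(D+\epsilon,E+\epsilon,m,n)$ code. *)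

(* Defs.v *)
From Stdlib Require Import Reals Lra Lia.
Open Scope R_scope.

Fixpoint rsum (n : nat) (f : nat -> R) : R :=
  match n with O => 0 | S n' => rsum n' f + f n' end.

(* A real linear form in the underlying Gaussian variables
   S_{i,j} (i in {0,1} = user index, j = source sample index) and
   Z_{i,l} (i = receiver index, l = channel use index).
   lf_s u i j = coefficient of S_{i,j};  lf_z u i l = coefficient of Z_{i,l}.
   (Indices are 0-based; user/receiver 1,2 of the paper are 0,1 here.) *)
Record LF := mkLF { lf_s : nat -> nat -> R ; lf_z : nat -> nat -> R }.

Definition lf_zero : LF := mkLF (fun _ _ => 0) (fun _ _ => 0).
Definition lf_add (u v : LF) : LF :=
  mkLF (fun i j => lf_s u i j + lf_s v i j) (fun i l => lf_z u i l + lf_z v i l).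
Definition lf_scale (c : R) (u : LF) : LF :=
  mkLF (fun i j => c * lf_s u i j) (fun i l => c * lf_z u i l).
Definition lf_sub (u v : LF) : LF := lf_add u (lf_scale (-1) v).
Definition lf_S (i j : nat) : LF :=
  mkLF (fun i' j' => if andb (Nat.eqb i i') (Nat.eqb j j') then 1 else 0) (fun _ _ => 0).
Definition lf_Z (i l : nat) : LF :=
  mkLF (fun _ _ => 0) (fun i' l' => if andb (Nat.eqb i i') (Nat.eqb l l') then 1 else 0).

(* Second moment E[(u . W)^2] of a linear form, when the pairs
   (S_{0,j},S_{1,j}), j<m, are i.i.d. N(0, Q_s) with
   Q_s = ss*[[1,rs],[rs,1]], the pairs (Z_{0,l},Z_{1,l}), l<n, are i.i.d.
   N(0, Q_z) with Q_z = sz*[[1,rz],[rz,1]], and sources and noises are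
   independent.  (Only coefficients with j<m, l<n matter.) *)
Definition second_moment (ss rs sz rz : R) (m n : nat) (u : LF) : R :=
  rsum m (fun j => ss * (lf_s u 0 j ^ 2 + lf_s u 1 j ^ 2
                          + 2 * rs * lf_s u 0 j * lf_s u 1 j))
  + rsum n (fun l => sz * (lf_z u 0 l ^ 2 + lf_z u 1 l ^ 2
                          + 2 * rz * lf_z u 0 l * lf_z u 1 l)).

(* Linear feedback encoder:
     X_k = sum_{i,j<m} a k i j * S_{i,j}
           + sum_{l<k} sum_{i} b k l i * Y_{i,l},   Y_{i,l} = X_l + Z_{i,l}.
   xf fuel k computes the linear form of X_k by recursion on l<k; it is
   correct as soon as fuel > k, and we use fuel = S k. *)
Fixpoint xf (a b : nat -> nat -> nat -> R) (fuel k : nat) : LF :=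
  match fuel with
  | O => lf_zero
  | S f =>
      mkLF
        (fun i j => a k i j
            + rsum k (fun l => (b k l 0%nat + b k l 1%nat) * lf_s (xf a b f l) i j))
        (fun i l' => rsum k (fun l => (b k l 0%nat + b k l 1%nat) * lf_z (xf a b f l) i l')
            + (if Nat.ltb l' k then b k l' i else 0))
  end.

Definition Xform (a b : nat -> nat -> nat -> R) (k : nat) : LF := xf a b (S k) k.

Definition Yform (a b : nat -> nat -> nat -> R) (i k : nat) : LF :=
  lf_add (Xform a b k) (lf_Z i k).

Fixpoint lf_sum (n : nat) (f : nat -> LF) : LF :=
  match n with O => lf_zero | S n' => lf_add (lf_sum n' f) (f n') end.

Definition Shat (a b c : nat -> nat -> nat -> R) (n i j : nat) : LF :=
  lf_sum n (fun k => lf_scale (c i j k) (Yform a b i k)).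

Definition linear_code (ss rs sz rz : R) (D E : R) (m n : nat)
    (a b c : nat -> nat -> nat -> R) : Prop :=
  (forall i : nat, (i < 2)%nat ->
     rsum m (fun j => second_moment ss rs sz rz m n
                        (lf_sub (lf_S i j) (Shat a b c n i j)))
     <= INR m * D)
  /\ rsum n (fun k => second_moment ss rs sz rz m n (Xform a b k)) <= INR m * E.

Definition lin_achievable (ss rs sz rz D E : R) : Prop :=
  forall eps : R, 0 < eps ->
    exists (m n : nat) (a b c : nat -> nat -> nat -> R),
      (0 < m)%nat /\ linear_code ss rs sz rz (D + eps) (E + eps) m n a b c.

Definition D_th (ss rs rz : R) : R := ss * (2 - rz - Rabs rs) / (2 - rz).

Definition E_OL (ss rs sz rz D : R) : R :=
  if Rle_dec (D_th ss rs rz) D then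
    2 * sz / (3 - rz) *
      ln (ss * (1 + Rabs rs) / (D + (2 - rz) * (D - ss) + ss * Rabs rs))
  else
    2 * sz * ( ln ((2 - rz - Rabs rs) * ss / ((2 - rz) * D))
             + / (3 - rz) * ln ((2 - rz) * (1 + Rabs rs) / (2 - rz - Rabs rs))).

(* Main.v *)
Require Import Defs.
From Stdlib Require Import Reals.
From Stdlib Require Import Lra Lia ZArith FunctionalExtensionality.
Open Scope R_scope.


Lemma rsum_ext n f g : (forall l, (l < n)%nat -> f l = g l) -> rsum n f = rsum n g.
Proof. induction n; simpl; intros H; [reflexivity|]. rewrite IHn by (intros; apply H; lia). rewrite (H n) by lia; reflexivity. Qed.
Lemma rsum_plus n f g : rsum n (fun l => f l + g l) = rsum n f + rsum n g.
Proof. induction n; simpl; [ring|]. rewrite IHn; ring. Qed.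
Lemma rsum_scal n c f : rsum n (fun l => c * f l) = c * rsum n f.
Proof. induction n; simpl; [ring|]. rewrite IHn; ring. Qed.
Lemma rsum_zero n : rsum n (fun _ => 0) = 0.
Proof. induction n; simpl; [ring|]. rewrite IHn; ring. Qed.
Lemma rsum_delta n k x : (k < n)%nat -> rsum n (fun l => if Nat.eqb k l then x else 0) = x.
Proof.
  induction n; intros H; [lia|]. simpl.
  destruct (Nat.eq_dec k n) as [->|Hne].
  - rewrite Nat.eqb_refl. rewrite (rsum_ext n _ (fun _ => 0)). rewrite rsum_zero; ring.
    intros l Hl. destruct (Nat.eqb_spec n l); [lia|reflexivity].
  - rewrite IHn by lia. destruct (Nat.eqb_spec k n); [lia|ring].
Qed.
Lemma rsum_delta' n k x : rsum n (fun l => if Nat.eqb l k then x else 0) = if Nat.ltb k n then x else 0.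
Proof.
  destruct (Nat.ltb_spec k n).
  - transitivity (rsum n (fun l => if Nat.eqb k l then x else 0)).
    apply rsum_ext; intros l _. rewrite Nat.eqb_sym; reflexivity.
    apply rsum_delta; exact H.
  - rewrite (rsum_ext n _ (fun _ => 0)). apply rsum_zero.
    intros l Hl. destruct (Nat.eqb_spec l k); [lia|reflexivity].
Qed.
Lemma rsum_le_const n f M : (forall l, (l < n)%nat -> f l <= M) -> rsum n f <= INR n * M.
Proof. induction n; cbn [rsum]; intros H. simpl; lra. rewrite S_INR.
  assert (rsum n f <= INR n * M) by (apply IHn; intros; apply H; lia).
  assert (f n <= M) by (apply H; lia). lra. Qed.

Lemma lf_ext (u v : LF) : (forall i j, lf_s u i j = lf_s v i j) -> (forall i l, lf_z u i l = lf_z v i l) -> u = v.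
Proof.
  destruct u as [us uz], v as [vs vz]; simpl; intros H1 H2.
  assert (us = vs) by (apply functional_extensionality; intro i; apply functional_extensionality; intro j; apply H1).
  assert (uz = vz) by (apply functional_extensionality; intro i; apply functional_extensionality; intro j; apply H2).
  subst; reflexivity.
Qed.

Section Bil.
Variables ss rs sz rz : R.
Variable n : nat.

Definition Bf (u v : LF) : R :=
  ss * (lf_s u 0 0 * lf_s v 0 0 + lf_s u 1 0 * lf_s v 1 0
        + rs * (lf_s u 0 0 * lf_s v 1 0 + lf_s u 1 0 * lf_s v 0 0))
  + rsum n (fun l => sz * (lf_z u 0 l * lf_z v 0 l + lf_z u 1 l * lf_z v 1 l
        + rz * (lf_z u 0 l * lf_z v 1 l + lf_z u 1 l * lf_z v 0 l))).

Lemma q_Bf u : second_moment ss rs sz rz 1 n u = Bf u u.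
Proof.
  unfold second_moment, Bf. simpl rsum at 1. f_equal. ring.
  apply rsum_ext; intros; ring.
Qed.

Lemma Bf_sym u v : Bf u v = Bf v u.
Proof. unfold Bf. f_equal. ring. apply rsum_ext; intros; ring. Qed.

Lemma Bf_add_l u v w : Bf (lf_add u v) w = Bf u w + Bf v w.
Proof.
  unfold Bf; simpl.
  match goal with |- _ = ?A + ?B + (?C + ?D) => replace (A + B + (C + D)) with ((A + C) + (B + D)) by ring end.
  f_equal. ring. rewrite <- rsum_plus. apply rsum_ext; intros; ring.
Qed.

Lemma Bf_scale_l c u w : Bf (lf_scale c u) w = c * Bf u w.
Proof.
  unfold Bf; simpl. rewrite (Rmult_plus_distr_l c), <- rsum_scal. f_equal. ring.
  apply rsum_ext; intros; ring.
Qed.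

Lemma Bf_add_r u v w : Bf w (lf_add u v) = Bf w u + Bf w v.
Proof. rewrite !(Bf_sym w). apply Bf_add_l. Qed.
Lemma Bf_scale_r c u w : Bf w (lf_scale c u) = c * Bf w u.
Proof. rewrite !(Bf_sym w). apply Bf_scale_l. Qed.
Lemma Bf_sub_l u v w : Bf (lf_sub u v) w = Bf u w - Bf v w.
Proof. unfold lf_sub. rewrite Bf_add_l, Bf_scale_l. ring. Qed.
Lemma Bf_sub_r u v w : Bf w (lf_sub u v) = Bf w u - Bf w v.
Proof. unfold lf_sub. rewrite Bf_add_r, Bf_scale_r. ring. Qed.

Lemma Bf_Z0 u k : (k < n)%nat -> Bf u (lf_Z 0 k) = sz * (lf_z u 0 k + rz * lf_z u 1 k).
Proof.
  intros Hk. unfold Bf; simpl.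
  rewrite (rsum_ext n _ (fun l => if Nat.eqb k l then sz * (lf_z u 0 k + rz * lf_z u 1 k) else 0)).
  rewrite rsum_delta by exact Hk. ring.
  intros l _. destruct (Nat.eqb_spec k l); [subst; ring | ring].
Qed.
Lemma Bf_Z1 u k : (k < n)%nat -> Bf u (lf_Z 1 k) = sz * (lf_z u 1 k + rz * lf_z u 0 k).
Proof.
  intros Hk. unfold Bf; simpl.
  rewrite (rsum_ext n _ (fun l => if Nat.eqb k l then sz * (lf_z u 1 k + rz * lf_z u 0 k) else 0)).
  rewrite rsum_delta by exact Hk. ring.
  intros l _. destruct (Nat.eqb_spec k l); [subst; ring | ring].
Qed.

Definition past (k : nat) (u : LF) : Prop := forall i l, (k <= l)%nat -> lf_z u i l = 0.

Lemma Bf_Z0_past u k : (k < n)%nat -> past k u -> Bf u (lf_Z 0 k) = 0.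
Proof. intros Hk Hp. rewrite Bf_Z0 by exact Hk. rewrite !Hp by lia. ring. Qed.
Lemma Bf_Z1_past u k : (k < n)%nat -> past k u -> Bf u (lf_Z 1 k) = 0.
Proof. intros Hk Hp. rewrite Bf_Z1 by exact Hk. rewrite !Hp by lia. ring. Qed.
Lemma Bf_ZZ00 k : (k < n)%nat -> Bf (lf_Z 0 k) (lf_Z 0 k) = sz.
Proof. intros Hk. rewrite Bf_Z0 by exact Hk. simpl. rewrite Nat.eqb_refl. ring. Qed.
Lemma Bf_ZZ11 k : (k < n)%nat -> Bf (lf_Z 1 k) (lf_Z 1 k) = sz.
Proof. intros Hk. rewrite Bf_Z1 by exact Hk. simpl. rewrite Nat.eqb_refl. ring. Qed.
Lemma Bf_ZZ01 k : (k < n)%nat -> Bf (lf_Z 0 k) (lf_Z 1 k) = sz * rz.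
Proof. intros Hk. rewrite Bf_Z1 by exact Hk. simpl. rewrite Nat.eqb_refl. ring. Qed.

Lemma rsum_zero2 f : (forall l, f l = 0) -> rsum n f = 0.
Proof. intros H. rewrite (rsum_ext n f (fun _ => 0)). apply rsum_zero. intros; apply H. Qed.
Lemma Bf_SS00 : Bf (lf_S 0 0) (lf_S 0 0) = ss.
Proof. unfold Bf; simpl. rewrite rsum_zero2 by (intros; ring). ring. Qed.
Lemma Bf_SS11 : Bf (lf_S 1 0) (lf_S 1 0) = ss.
Proof. unfold Bf; simpl. rewrite rsum_zero2 by (intros; ring). ring. Qed.
Lemma Bf_SS01 : Bf (lf_S 0 0) (lf_S 1 0) = ss * rs.
Proof. unfold Bf; simpl. rewrite rsum_zero2 by (intros; ring). ring. Qed.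
End Bil.

Lemma rsum_delta_f n k (f : nat -> R) : rsum n (fun l => if Nat.eqb l k then f l else 0) = if Nat.ltb k n then f k else 0.
Proof.
  induction n; cbn [rsum]. destruct (Nat.ltb_spec k 0); [lia|ring].
  rewrite IHn. destruct (Nat.eqb_spec n k); destruct (Nat.ltb_spec k n); destruct (Nat.ltb_spec k (S n)); subst; try lia; ring.
Qed.

Record St := mkSt { sV0 : R; sV1 : R; sC : R }.
Record Prm := mkPrm { pw0 : R; pw1 : R; pc0 : R; pc1 : R }.

Section Scheme.
Variables ss rs sz rz t s : R.
Variables N1 N2 : nat.

Definition Pof (st : St) (p : Prm) : R :=
  pw0 p * pw0 p * sV0 st + pw1 p * pw1 p * sV1 st + 2 * pw0 p * pw1 p * sC st.
Definition g0of (st : St) (p : Prm) : R := pw0 p * sV0 st + pw1 p * sC st.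
Definition g1of (st : St) (p : Prm) : R := pw0 p * sC st + pw1 p * sV1 st.

Definition nextst (st : St) (p : Prm) : St :=
  mkSt (sV0 st - 2 * pc0 p * g0of st p + pc0 p * pc0 p * (Pof st p + sz))
       (sV1 st - 2 * pc1 p * g1of st p + pc1 p * pc1 p * (Pof st p + sz))
       (sC st - pc0 p * g1of st p - pc1 p * g0of st p + pc0 p * pc1 p * (Pof st p + rz * sz)).

Definition alpha1 (st : St) : R :=
  let U := (sV0 st + sV1 st + 2 * s * sC st) / 2 in
  if Rlt_dec 0 U then sqrt (t * sz / (2 * U)) else 0.
Definition alphaV (V : R) : R := if Rlt_dec 0 V then sqrt (t * sz / V) else 0.

Definition prm1 (st : St) : Prm :=
  let w0 := alpha1 st in let w1 := s * alpha1 st in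
  let p0 := mkPrm w0 w1 0 0 in
  mkPrm w0 w1 (g0of st p0 / (Pof st p0 + sz)) (g1of st p0 / (Pof st p0 + sz)).
Definition prm2 (st : St) : Prm :=
  let al := alphaV (sV0 st) in
  mkPrm al 0 (al * sV0 st / (al * al * sV0 st + sz)) 0.
Definition prm3 (st : St) : Prm :=
  let al := alphaV (sV1 st) in
  mkPrm 0 al 0 (al * sV1 st / (al * al * sV1 st + sz)).
Definition prm (k : nat) (st : St) : Prm :=
  if Nat.ltb k N1 then prm1 st
  else if Nat.ltb k (N1 + N2) then prm2 st
  else prm3 st.

Fixpoint state (k : nat) : St :=
  match k with
  | O => mkSt ss ss (ss * rs)
  | S k' => nextst (state k') (prm k' (state k'))
  end.

Definition pk (k : nat) : Prm := prm k (state k).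

Definition Tf (p : Prm) (E : LF * LF) : LF :=
  lf_add (lf_scale (pw0 p) (fst E)) (lf_scale (pw1 p) (snd E)).

Fixpoint Ep (k : nat) : LF * LF :=
  match k with
  | O => (lf_S 0 0, lf_S 1 0)
  | S k' =>
     let E := Ep k' in let p := pk k' in let T := Tf p E in
     (lf_sub (fst E) (lf_scale (pc0 p) (lf_add T (lf_Z 0 k'))),
      lf_sub (snd E) (lf_scale (pc1 p) (lf_add T (lf_Z 1 k'))))
  end.

Definition E0 k := fst (Ep k).
Definition E1 k := snd (Ep k).
Definition Tk k := Tf (pk k) (Ep k).

Lemma E0_S k : E0 (S k) = lf_sub (E0 k) (lf_scale (pc0 (pk k)) (lf_add (Tk k) (lf_Z 0 k))).
Proof. reflexivity. Qed.
Lemma E1_S k : E1 (S k) = lf_sub (E1 k) (lf_scale (pc1 (pk k)) (lf_add (Tk k) (lf_Z 1 k))).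
Proof. reflexivity. Qed.
Lemma Tk_def k : Tk k = lf_add (lf_scale (pw0 (pk k)) (E0 k)) (lf_scale (pw1 (pk k)) (E1 k)).
Proof. reflexivity. Qed.
Lemma state_S k : state (S k) = nextst (state k) (pk k).
Proof. reflexivity. Qed.

Definition w0 k := pw0 (pk k).
Definition w1 k := pw1 (pk k).
Definition c0 k := pc0 (pk k).
Definition c1 k := pc1 (pk k).

Definition acoef (k i j : nat) : R :=
  w0 k * (if andb (Nat.eqb 0 i) (Nat.eqb 0 j) then 1 else 0)
  + w1 k * (if andb (Nat.eqb 1 i) (Nat.eqb 0 j) then 1 else 0).
Definition bcoef (k l i : nat) : R :=
  - (w0 k * c0 l * (if Nat.eqb 0 i then 1 else 0) + w1 k * c1 l * (if Nat.eqb 1 i then 1 else 0)).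
Definition ccoef (i j k : nat) : R := if Nat.eqb i 0 then c0 k else c1 k.

Lemma E0_s k i j : lf_s (E0 k) i j = (if andb (Nat.eqb 0 i) (Nat.eqb 0 j) then 1 else 0) - rsum k (fun l => c0 l * lf_s (Tk l) i j).
Proof.
  induction k. simpl; ring.
  rewrite E0_S. cbn [rsum lf_s lf_sub lf_add lf_scale lf_Z]. rewrite IHk. unfold c0. ring.
Qed.
Lemma E1_s k i j : lf_s (E1 k) i j = (if andb (Nat.eqb 1 i) (Nat.eqb 0 j) then 1 else 0) - rsum k (fun l => c1 l * lf_s (Tk l) i j).
Proof.
  induction k. simpl; ring.
  rewrite E1_S. cbn [rsum lf_s lf_sub lf_add lf_scale lf_Z]. rewrite IHk. unfold c1. ring.
Qed.
Lemma E0_z k i l' : lf_z (E0 k) i l' = - rsum k (fun l => c0 l * (lf_z (Tk l) i l' + if andb (Nat.eqb 0 i) (Nat.eqb l l') then 1 else 0)).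
Proof.
  induction k. simpl; ring.
  rewrite E0_S. cbn [rsum lf_z lf_sub lf_add lf_scale lf_Z]. rewrite IHk. unfold c0. ring.
Qed.
Lemma E1_z k i l' : lf_z (E1 k) i l' = - rsum k (fun l => c1 l * (lf_z (Tk l) i l' + if andb (Nat.eqb 1 i) (Nat.eqb l l') then 1 else 0)).
Proof.
  induction k. simpl; ring.
  rewrite E1_S. cbn [rsum lf_z lf_sub lf_add lf_scale lf_Z]. rewrite IHk. unfold c1. ring.
Qed.

Lemma Tk_s k i j : lf_s (Tk k) i j = acoef k i j - rsum k (fun l => (w0 k * c0 l + w1 k * c1 l) * lf_s (Tk l) i j).
Proof.
  rewrite Tk_def. cbn [lf_s lf_add lf_scale]. rewrite E0_s, E1_s.
  rewrite (rsum_ext k (fun l => (w0 k * c0 l + w1 k * c1 l) * lf_s (Tk l) i j) (fun l => w0 k * (c0 l * lf_s (Tk l) i j) + w1 k * (c1 l * lf_s (Tk l) i j)))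
    by (intros; ring).
  rewrite rsum_plus, !rsum_scal. unfold acoef, w0, w1. ring.
Qed.

Lemma Tk_z k i l' : lf_z (Tk k) i l' = - rsum k (fun l => (w0 k * c0 l + w1 k * c1 l) * lf_z (Tk l) i l')
   + (if Nat.ltb l' k then bcoef k l' i else 0).
Proof.
  rewrite Tk_def. cbn [lf_z lf_add lf_scale]. rewrite E0_z, E1_z.
  rewrite (rsum_ext k (fun l => c0 l * (lf_z (Tk l) i l' + if andb (Nat.eqb 0 i) (Nat.eqb l l') then 1 else 0)) (fun l => c0 l * lf_z (Tk l) i l' + (if Nat.eqb l l' then c0 l * (if Nat.eqb 0 i then 1 else 0) else 0)))
    by (intros l _; destruct (Nat.eqb 0 i), (Nat.eqb l l'); simpl; ring).
  rewrite (rsum_ext k (fun l => c1 l * (lf_z (Tk l) i l' + if andb (Nat.eqb 1 i) (Nat.eqb l l') then 1 else 0)) (fun l => c1 l * lf_z (Tk l) i l' + (if Nat.eqb l l' then c1 l * (if Nat.eqb 1 i then 1 else 0) else 0)))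
    by (intros l _; destruct (Nat.eqb 1 i), (Nat.eqb l l'); simpl; ring).
  rewrite !rsum_plus, !rsum_delta_f.
  rewrite (rsum_ext k (fun l => (w0 k * c0 l + w1 k * c1 l) * lf_z (Tk l) i l') (fun l => w0 k * (c0 l * lf_z (Tk l) i l') + w1 k * (c1 l * lf_z (Tk l) i l')))
    by (intros; ring).
  rewrite rsum_plus, !rsum_scal. unfold bcoef.
  unfold w0, w1, c0, c1. destruct (Nat.ltb l' k); ring.
Qed.

Lemma xf_eq f : forall k, (k < f)%nat -> xf acoef bcoef f k = Tk k.
Proof.
  induction f; intros k Hk. lia.
  apply lf_ext; intros i j; cbn [xf lf_s lf_z].
  - rewrite Tk_s.
    rewrite (rsum_ext k _ (fun l => - (w0 k * c0 l + w1 k * c1 l) * lf_s (Tk l) i j)).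
    + rewrite (rsum_ext k (fun l => - _ * _) (fun l => -1 * ((w0 k * c0 l + w1 k * c1 l) * lf_s (Tk l) i j))) by (intros; ring).
      rewrite rsum_scal. ring.
    + intros l Hl. rewrite IHf by lia. unfold bcoef. simpl. ring.
  - rewrite Tk_z.
    rewrite (rsum_ext k _ (fun l => -1 * ((w0 k * c0 l + w1 k * c1 l) * lf_z (Tk l) i j))).
    + rewrite rsum_scal. ring.
    + intros l Hl. rewrite IHf by lia. unfold bcoef. simpl. ring.
Qed.

Lemma Xform_eq k : Xform acoef bcoef k = Tk k.
Proof. apply xf_eq; lia. Qed.

Lemma Shat0_eq k : lf_sub (lf_S 0 0) (Shat acoef bcoef ccoef k 0 0) = E0 k.
Proof.
  induction k.
  - apply lf_ext; intros; simpl; ring.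
  - assert (H1 := fun i j => f_equal (fun u => lf_s u i j) IHk).
    assert (H2 := fun i j => f_equal (fun u => lf_z u i j) IHk). cbv beta in H1, H2.
    apply lf_ext; intros i j; rewrite E0_S; cbn [lf_s lf_z lf_sub lf_add lf_scale].
    + rewrite <- H1. unfold Shat, Yform. cbn [lf_sum lf_s lf_z lf_sub lf_add lf_scale lf_S lf_Z].
      rewrite Xform_eq. unfold ccoef, c0; cbn [Nat.eqb]. ring.
    + rewrite <- H2. unfold Shat, Yform. cbn [lf_sum lf_s lf_z lf_sub lf_add lf_scale lf_S lf_Z].
      rewrite Xform_eq. unfold ccoef, c0; cbn [Nat.eqb]. ring.
Qed.
Lemma Shat1_eq k : lf_sub (lf_S 1 0) (Shat acoef bcoef ccoef k 1 0) = E1 k.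
Proof.
  induction k.
  - apply lf_ext; intros; simpl; ring.
  - assert (H1 := fun i j => f_equal (fun u => lf_s u i j) IHk).
    assert (H2 := fun i j => f_equal (fun u => lf_z u i j) IHk). cbv beta in H1, H2.
    apply lf_ext; intros i j; rewrite E1_S; cbn [lf_s lf_z lf_sub lf_add lf_scale].
    + rewrite <- H1. unfold Shat, Yform. cbn [lf_sum lf_s lf_z lf_sub lf_add lf_scale lf_S lf_Z].
      rewrite Xform_eq. unfold ccoef, c1; cbn [Nat.eqb]. ring.
    + rewrite <- H2. unfold Shat, Yform. cbn [lf_sum lf_s lf_z lf_sub lf_add lf_scale lf_S lf_Z].
      rewrite Xform_eq. unfold ccoef, c1; cbn [Nat.eqb]. ring.
Qed.


Local Notation nn := (N1 + N2 + N2)%nat.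
Local Notation BB := (Bf ss rs sz rz nn).

Lemma past_S0 k : past k (E0 k) -> past k (E1 k) -> past (S k) (E0 (S k)).
Proof.
  intros H0 H1 i l Hl. rewrite E0_S. cbn [lf_z lf_sub lf_add lf_scale lf_Z]. rewrite Tk_def.
  cbn [lf_z lf_sub lf_add lf_scale]. rewrite H0, H1 by lia.
  destruct (Nat.eqb_spec k l); [lia|]. rewrite Bool.andb_false_r. ring.
Qed.
Lemma past_S1 k : past k (E0 k) -> past k (E1 k) -> past (S k) (E1 (S k)).
Proof.
  intros H0 H1 i l Hl. rewrite E1_S. cbn [lf_z lf_sub lf_add lf_scale lf_Z]. rewrite Tk_def.
  cbn [lf_z lf_sub lf_add lf_scale]. rewrite H0, H1 by lia.
  destruct (Nat.eqb_spec k l); [lia|]. rewrite Bool.andb_false_r. ring.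
Qed.

Lemma Bf_Zl0 u k : (k < nn)%nat -> past k u -> BB (lf_Z 0 k) u = 0.
Proof. intros. rewrite Bf_sym. apply Bf_Z0_past; auto. Qed.
Lemma Bf_Zl1 u k : (k < nn)%nat -> past k u -> BB (lf_Z 1 k) u = 0.
Proof. intros. rewrite Bf_sym. apply Bf_Z1_past; auto. Qed.

Ltac expandB := repeat (rewrite ?Bf_sub_l, ?Bf_sub_r, ?Bf_scale_l, ?Bf_scale_r, ?Bf_add_l, ?Bf_add_r).

Lemma cov_inv k : (k <= nn)%nat ->
  BB (E0 k) (E0 k) = sV0 (state k) /\ BB (E1 k) (E1 k) = sV1 (state k) /\ BB (E0 k) (E1 k) = sC (state k) /\ past k (E0 k) /\ past k (E1 k).
Proof.
  induction k; intros Hk.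
  - unfold E0, E1; simpl Ep. rewrite Bf_SS00, Bf_SS11, Bf_SS01. simpl.
    repeat split; try reflexivity; unfold past; intros; reflexivity.
  - destruct IHk as (HV0 & HV1 & HC & HP0 & HP1); [lia|].
    assert (Hkn : (k < nn)%nat) by lia.
    assert (Q0 := past_S0 k HP0 HP1). assert (Q1 := past_S1 k HP0 HP1).
    rewrite state_S. rewrite E0_S, E1_S, Tk_def.
    rewrite E0_S, Tk_def in Q0. rewrite E1_S, Tk_def in Q1.
    split; [|split; [|split]].
    + expandB.
      rewrite ?Bf_Z0_past, ?Bf_Z1_past, ?Bf_Zl0, ?Bf_Zl1, ?Bf_ZZ00 by auto.
      rewrite (Bf_sym _ _ _ _ _ (E1 k) (E0 k)). rewrite HV0, HV1, HC.
      unfold nextst, Pof, g0of, g1of; simpl. ring.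
    + expandB.
      rewrite ?Bf_Z0_past, ?Bf_Z1_past, ?Bf_Zl0, ?Bf_Zl1, ?Bf_ZZ11 by auto.
      rewrite (Bf_sym _ _ _ _ _ (E1 k) (E0 k)). rewrite HV0, HV1, HC.
      unfold nextst, Pof, g0of, g1of; simpl. ring.
    + expandB.
      rewrite ?Bf_Z0_past, ?Bf_Z1_past, ?Bf_Zl0, ?Bf_Zl1, ?Bf_ZZ01 by auto.
      rewrite (Bf_sym _ _ _ _ _ (E1 k) (E0 k)). rewrite HV0, HV1, HC.
      unfold nextst, Pof, g0of, g1of; simpl. ring.
    + split; assumption.
Qed.

Lemma energy_k k : (k <= nn)%nat -> BB (Tk k) (Tk k) = Pof (state k) (pk k).
Proof.
  intros Hk. destruct (cov_inv k Hk) as (HV0 & HV1 & HC & _ & _).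
  rewrite Tk_def. expandB. rewrite (Bf_sym _ _ _ _ _ (E1 k) (E0 k)). rewrite HV0, HV1, HC.
  unfold Pof. ring.
Qed.

End Scheme.

Lemma div_nonneg x y : 0 <= x -> 0 < y -> 0 <= x / y.
Proof. intros. unfold Rdiv. apply Rmult_le_pos; [lra|left; apply Rinv_0_lt_compat; lra]. Qed.

Definition ff (t rz : R) := (1 + t * (1 + rz) / 2) / ((1 + t) * (1 + t)).

Lemma p1_pure (s t sz rz V C a : R) : s * s = 1 -> 0 < t -> 0 < sz -> rz < 1 ->
  0 < V + s * C -> a * a * (2 * (V + s * C)) = t * sz ->
  let P := a * a * V + s * a * (s * a) * V + 2 * a * (s * a) * C in
  let g0 := a * V + s * a * C in
  let g1 := a * C + s * a * V in
  let c0 := g0 / (P + sz) in let c1 := g1 / (P + sz) in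
  let V0' := V - 2 * c0 * g0 + c0 * c0 * (P + sz) in
  let V1' := V - 2 * c1 * g1 + c1 * c1 * (P + sz) in
  let C' := C - c0 * g1 - c1 * g0 + c0 * c1 * (P + rz * sz) in
  V0' = V1' /\ V0' + s * C' = (V + s * C) * ff t rz /\
  (2 - rz) * V0' - s * C' <= (2 - rz) * V - s * C.
Proof.
  intros Hs Ht Hsz Hrz HU Ha P g0 g1 c0 c1 V0' V1' C'.
  set (U := V + s * C) in *.
  assert (HP : P = t * sz).
  { unfold P. rewrite <- Ha. transitivity (a * a * ((1 + s * s) * V + 2 * s * C)). ring.
    rewrite Hs. unfold U. ring. }
  assert (Hg0 : g0 = a * U) by (unfold g0, U; ring).
  assert (Hg1 : g1 = s * g0).
  { unfold g1, g0. transitivity (a * (s * s) * C + s * a * V). rewrite Hs; ring. ring. }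
  set (K := t * sz + sz).
  assert (HK : 0 < K) by (unfold K; nra).
  assert (HG : g0 * g0 = t * sz * U / 2).
  { rewrite Hg0, <- Ha. field. }
  assert (HV0 : V0' = V - g0 * g0 / K).
  { unfold V0', c0. rewrite HP. fold K. field. lra. }
  assert (HV1 : V1' = V - g0 * g0 / K).
  { unfold V1', c1. rewrite HP, Hg1. fold K.
    transitivity (V - (s * s) * (g0 * g0 / K)). field. lra. rewrite Hs. ring. }
  assert (HC : s * C' = s * C - 2 * (g0 * g0) / K + g0 * g0 * (t * sz + rz * sz) / (K * K)).
  { unfold C', c0, c1. rewrite HP, Hg1. fold K.
    transitivity (s * C - (s * s) * (2 * (g0 * g0) / K) + (s * s) * (g0 * g0 * (t * sz + rz * sz) / (K * K))).
    field. lra. rewrite Hs. ring. }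
  split; [|split].
  - rewrite HV0, HV1. reflexivity.
  - rewrite HV0. rewrite Rplus_comm. rewrite HC. rewrite HG. unfold ff, K.
    replace (s * C) with (U - V) by (unfold U; ring). field. split; nra.
  - assert (Hd : (2 - rz) * V0' - s * C' - ((2 - rz) * V - s * C) = - (g0 * g0) * (t * sz * (1 - rz)) / (K * K)).
    { rewrite HV0. replace ((2 - rz) * (V - g0 * g0 / K) - s * C' - ((2 - rz) * V - s * C))
        with (- (s * C') + s * C - (2 - rz) * (g0 * g0 / K)) by ring.
      rewrite HC. unfold K. field. nra. }
    assert (0 <= g0 * g0 * (t * sz * (1 - rz)) / (K * K)).
    { apply Rmult_le_pos. apply Rmult_le_pos. nra. apply Rmult_le_pos; nra.
      left; apply Rinv_0_lt_compat; nra. }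
    lra.
Qed.

Section Real.
Variables ss rs sz rz t s : R.
Variables N1 N2 : nat.
Hypothesis Hs : s * s = 1.
Hypothesis Ht : 0 < t.
Hypothesis Hsz : 0 < sz.
Hypothesis Hrz1 : rz < 1.
Hypothesis Hrz2 : -1 < rz.

Local Notation ST k := (state ss rs sz rz t s N1 N2 k).
Local Notation PRM k st := (prm sz t s N1 N2 k st).

Lemma state_S' k : ST (S k) = nextst sz rz (ST k) (PRM k (ST k)).
Proof. reflexivity. Qed.

Lemma prm_1 k st : (k < N1)%nat -> PRM k st = prm1 sz t s st.
Proof. intros H. unfold prm. apply Nat.ltb_lt in H. rewrite H. reflexivity. Qed.
Lemma prm_2 k st : (N1 <= k < N1 + N2)%nat -> PRM k st = prm2 sz t st.
Proof. intros H. unfold prm. destruct (Nat.ltb_spec k N1); [lia|]. destruct (Nat.ltb_spec k (N1+N2)); [reflexivity|lia]. Qed.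
Lemma prm_3 k st : (N1 + N2 <= k)%nat -> PRM k st = prm3 sz t st.
Proof. intros H. unfold prm. destruct (Nat.ltb_spec k N1); [lia|]. destruct (Nat.ltb_spec k (N1+N2)); [lia|reflexivity]. Qed.

Lemma ff_pos : 0 < ff t rz.
Proof. unfold ff. apply Rdiv_lt_0_compat; nra. Qed.

Lemma alphaV_sq V : 0 < V -> alphaV sz t V * alphaV sz t V * V = t * sz.
Proof. intros HV. unfold alphaV. destruct (Rlt_dec 0 V); [|lra].
  rewrite sqrt_sqrt. field; lra. apply div_nonneg; nra. Qed.
Lemma alphaV_0 V : ~ 0 < V -> alphaV sz t V = 0.
Proof. intros HV. unfold alphaV. destruct (Rlt_dec 0 V); [lra|reflexivity]. Qed.

Lemma phase1 k : (k <= N1)%nat -> 0 < ss + s * (ss * rs) ->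
  sV0 (ST k) = sV1 (ST k) /\
  sV0 (ST k) + s * sC (ST k) = (ss + s * (ss * rs)) * ff t rz ^ k /\
  (2 - rz) * sV0 (ST k) - s * sC (ST k) <= (2 - rz) * ss - s * (ss * rs).
Proof.
  intros Hk HU0. induction k.
  - simpl. repeat split; lra.
  - destruct IHk as (H1 & H2 & H3); [lia|].
    rewrite state_S', prm_1 by lia.
    set (st := ST k) in *.
    assert (HUp : 0 < sV0 st + s * sC st).
    { rewrite H2. apply Rmult_lt_0_compat; [lra|]. apply pow_lt, ff_pos. }
    set (a := alpha1 sz t s st).
    assert (Ha : a * a * (2 * (sV0 st + s * sC st)) = t * sz).
    { unfold a, alpha1. rewrite <- H1.
      destruct (Rlt_dec 0 ((sV0 st + sV0 st + 2 * s * sC st) / 2)) as [Hp|Hp]; [|exfalso; lra].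
      rewrite sqrt_sqrt. field. lra. apply div_nonneg; nra. }
    destruct (p1_pure s t sz rz (sV0 st) (sC st) a Hs Ht Hsz Hrz1 HUp Ha) as (G1 & G2 & G3).
    unfold nextst, prm1, Pof, g0of, g1of; cbn [sV0 sV1 sC pw0 pw1 pc0 pc1].
    fold a. rewrite <- H1.
    split; [exact G1|split].
    + rewrite G2, H2. simpl. ring.
    + eapply Rle_trans; [exact G3|exact H3].
Qed.

Lemma phase2 j Dm : (j <= N2)%nat -> 0 < Dm -> sV0 (ST N1) <= Dm ->
  sV1 (ST (N1 + j)) = sV1 (ST N1) /\ sV0 (ST (N1 + j)) <= Dm * (/ (1 + t)) ^ j.
Proof.
  intros Hj HDm H0. induction j.
  - rewrite Nat.add_0_r. simpl. split; lra.
  - destruct IHj as (H1 & H2); [lia|].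
    replace (N1 + S j)%nat with (S (N1 + j)) by lia.
    rewrite state_S', prm_2 by lia.
    set (st := ST (N1 + j)) in *.
    unfold nextst, prm2, Pof, g0of, g1of; cbn [sV0 sV1 sC pw0 pw1 pc0 pc1].
    set (a := alphaV sz t (sV0 st)).
    assert (Hr : 0 < / (1 + t)) by (apply Rinv_0_lt_compat; lra).
    assert (Hpj : 0 < (/ (1 + t)) ^ j) by (apply pow_lt; lra).
    split.
    + rewrite <- H1. ring.
    + destruct (Rlt_dec 0 (sV0 st)) as [Hp|Hp].
      * assert (Ha := alphaV_sq _ Hp). fold a in Ha.
        set (V := sV0 st) in *. set (V1 := sV1 st). set (C := sC st).
        assert (HE : V - 2 * (a * V / (a * a * V + sz)) * (a * V + 0 * C) +
          a * V / (a * a * V + sz) * (a * V / (a * a * V + sz)) * (a * a * V + 0 * 0 * V1 + 2 * a * 0 * C + sz)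
          = V / (1 + t)).
        { transitivity (V - (a * a * V) * V / (a * a * V + sz)). field. rewrite Ha; nra.
          rewrite Ha. field. split; nra. }
        rewrite HE. rewrite <- pow_1 at 1. unfold Rdiv. rewrite pow_1.
        set (r := / (1 + t)) in *. simpl pow.
        replace (Dm * (r * r ^ j)) with (Dm * r ^ j * r) by ring.
        rewrite (Rmult_comm V). rewrite (Rmult_comm _ r). apply Rmult_le_compat_l; lra.
      * assert (Ha := alphaV_0 _ Hp). fold a in Ha. rewrite Ha.
        replace (sV0 st - 2 * (0 * sV0 st / (0 * 0 * sV0 st + sz)) * (0 * sV0 st + 0 * sC st) +
          0 * sV0 st / (0 * 0 * sV0 st + sz) * (0 * sV0 st / (0 * 0 * sV0 st + sz)) *
          (0 * 0 * sV0 st + 0 * 0 * sV1 st + 2 * 0 * 0 * sC st + sz)) with (sV0 st) by (field; lra).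
        assert (0 < Dm * (/ (1 + t)) ^ S j) by (apply Rmult_lt_0_compat; [lra|apply pow_lt; lra]).
        lra.
Qed.


Lemma phase3 j Dm : (j <= N2)%nat -> 0 < Dm -> sV1 (ST (N1 + N2)) <= Dm ->
  sV0 (ST (N1 + N2 + j)) = sV0 (ST (N1 + N2)) /\ sV1 (ST (N1 + N2 + j)) <= Dm * (/ (1 + t)) ^ j.
Proof.
  intros Hj HDm H0. induction j.
  - rewrite Nat.add_0_r. simpl. split; lra.
  - destruct IHj as (H1 & H2); [lia|].
    replace (N1 + N2 + S j)%nat with (S (N1 + N2 + j)) by lia.
    rewrite state_S', prm_3 by lia.
    set (st := ST (N1 + N2 + j)) in *.
    unfold nextst, prm3, Pof, g0of, g1of; cbn [sV0 sV1 sC pw0 pw1 pc0 pc1].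
    set (a := alphaV sz t (sV1 st)).
    assert (Hr : 0 < / (1 + t)) by (apply Rinv_0_lt_compat; lra).
    assert (Hpj : 0 < (/ (1 + t)) ^ j) by (apply pow_lt; lra).
    split.
    + rewrite <- H1. ring.
    + destruct (Rlt_dec 0 (sV1 st)) as [Hp|Hp].
      * assert (Ha := alphaV_sq _ Hp). fold a in Ha.
        set (V := sV1 st) in *. set (V0 := sV0 st). set (C := sC st).
        assert (HE : V - 2 * (a * V / (a * a * V + sz)) * (0 * C + a * V) +
          a * V / (a * a * V + sz) * (a * V / (a * a * V + sz)) * (0 * 0 * V0 + a * a * V + 2 * 0 * a * C + sz)
          = V / (1 + t)).
        { transitivity (V - (a * a * V) * V / (a * a * V + sz)). field. rewrite Ha; nra.
          rewrite Ha. field. split; nra. }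
        rewrite HE. rewrite <- pow_1 at 1. unfold Rdiv. rewrite pow_1.
        set (r := / (1 + t)) in *. simpl pow.
        replace (Dm * (r * r ^ j)) with (Dm * r ^ j * r) by ring.
        rewrite (Rmult_comm V). rewrite (Rmult_comm _ r). apply Rmult_le_compat_l; lra.
      * assert (Ha := alphaV_0 _ Hp). fold a in Ha. rewrite Ha.
        replace (sV1 st - 2 * (0 * sV1 st / (0 * 0 * sV1 st + sz)) * (0 * sC st + 0 * sV1 st) +
          0 * sV1 st / (0 * 0 * sV1 st + sz) * (0 * sV1 st / (0 * 0 * sV1 st + sz)) *
          (0 * 0 * sV0 st + 0 * 0 * sV1 st + 2 * 0 * 0 * sC st + sz)) with (sV1 st) by (field; lra).
        assert (0 < Dm * (/ (1 + t)) ^ S j) by (apply Rmult_lt_0_compat; [lra|apply pow_lt; lra]).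
        lra.
Qed.

Lemma energy_bound k : Pof (ST k) (PRM k (ST k)) <= t * sz.
Proof.
  set (st := ST k).
  unfold prm. destruct (Nat.ltb k N1); [|destruct (Nat.ltb k (N1 + N2))].
  - unfold prm1, Pof; cbn [pw0 pw1].
    set (a := alpha1 sz t s st).
    replace (a * a * sV0 st + s * a * (s * a) * sV1 st + 2 * a * (s * a) * sC st)
      with (a * a * (sV0 st + (s * s) * sV1 st + 2 * s * sC st)) by ring.
    rewrite Hs.
    unfold a, alpha1.
    destruct (Rlt_dec 0 ((sV0 st + sV1 st + 2 * s * sC st) / 2)) as [Hp|Hp].
    + rewrite sqrt_sqrt. right. field. lra. apply div_nonneg; nra.
    + nra.
  - unfold prm2, Pof; cbn [pw0 pw1].
    destruct (Rlt_dec 0 (sV0 st)) as [Hp|Hp].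
    + assert (Ha := alphaV_sq _ Hp). nra.
    + rewrite (alphaV_0 _ Hp). nra.
  - unfold prm3, Pof; cbn [pw0 pw1].
    destruct (Rlt_dec 0 (sV1 st)) as [Hp|Hp].
    + assert (Ha := alphaV_sq _ Hp). nra.
    + rewrite (alphaV_0 _ Hp). nra.
Qed.

End Real.

Lemma ln_nonneg x : 1 <= x -> 0 <= ln x.
Proof. intros H. destruct (Req_dec x 1) as [->|Hn]. rewrite ln_1; lra.
  left. rewrite <- ln_1. apply ln_increasing; lra. Qed.

Lemma exp_pow x n : exp x ^ n = exp (INR n * x).
Proof. induction n. simpl. rewrite Rmult_0_l, exp_0. reflexivity.
  rewrite S_INR. simpl pow. rewrite IHn, <- exp_plus. f_equal. ring. Qed.

Lemma nat_between x : 0 <= x -> exists N : nat, x <= INR N <= x + 1.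
Proof.
  intros Hx. destruct (archimed x) as [H1 H2].
  assert (Hz : (0 <= up x)%Z). { apply le_IZR. lra. }
  exists (Z.to_nat (up x)). rewrite INR_IZR_INZ, Z2Nat.id by exact Hz. lra.
Qed.

Lemma inv_exp_bound t : 0 < t -> / (1 + t) <= exp (- (t / (1 + t))).
Proof. intros Ht. eapply Rle_trans; [|apply exp_ineq1_le]. right. field. lra. Qed.

Lemma ff_bound t rz : 0 < t -> -1 < rz ->
  ff t rz <= exp (- (2 * t / (1 + t) - t * (1 + rz) / 2)).
Proof.
  intros Ht Hrz. unfold ff.
  replace (- (2 * t / (1 + t) - t * (1 + rz) / 2)) with (t * (1 + rz) / 2 + (- (t / (1 + t)) + - (t / (1 + t)))) by (field; lra).
  rewrite !exp_plus.
  replace ((1 + t * (1 + rz) / 2) / ((1 + t) * (1 + t))) with ((1 + t * (1 + rz) / 2) * (/ (1 + t) * / (1 + t))) by (field; lra).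
  assert (H1 := exp_ineq1_le (t * (1 + rz) / 2)).
  assert (H2 := inv_exp_bound t Ht).
  assert (0 < / (1 + t)) by (apply Rinv_0_lt_compat; lra).
  apply Rmult_le_compat; try nra.
Qed.

Lemma slope_bound t rz : 0 < t <= 1 -> -1 < rz < 1 ->
  t / (2 * t / (1 + t) - t * (1 + rz) / 2) <= 2 / (3 - rz) + 4 * t / (1 - rz).
Proof.
  intros Ht Hrz.
  set (D1 := 3 - rz - t * (1 + rz)).
  assert (HD1 : 2 * (1 - rz) <= D1) by (unfold D1; nra).
  replace (t / (2 * t / (1 + t) - t * (1 + rz) / 2)) with (2 / (3 - rz) + 8 * t / (D1 * (3 - rz))).
  2:{ unfold D1. field. repeat split; try lra. nra. intro H. nra. }
  apply Rplus_le_compat_l.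
  unfold Rdiv. apply (Rmult_le_reg_r (D1 * (3 - rz) * (1 - rz))). apply Rmult_lt_0_compat; [apply Rmult_lt_0_compat|]; lra.
  replace (8 * t * / (D1 * (3 - rz)) * (D1 * (3 - rz) * (1 - rz))) with (8 * t * (1 - rz)) by (field; split; lra).
  replace (4 * t * / (1 - rz) * (D1 * (3 - rz) * (1 - rz))) with (4 * t * (D1 * (3 - rz))) by (field; lra).
  assert (D1 * (3 - rz) >= 4 * (1 - rz)) by nra. nra.
Qed.

Lemma exp_mono x y : x <= y -> exp x <= exp y.
Proof. intros H. destruct (Req_dec x y) as [->|Hn]. lra. left. apply exp_increasing. lra. Qed.

Lemma Rabs_bounds x : Rabs x < 1 -> -1 < x < 1 /\ 0 <= Rabs x.
Proof. intros H. split. unfold Rabs in H. destruct (Rcase_abs x); lra. apply Rabs_pos. Qed.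

Lemma core ss rs sz rz D Dm : 0 < ss -> 0 < sz -> Rabs rs < 1 -> Rabs rz < 1 -> 0 < D ->
  D <= Dm -> D_th ss rs rz <= Dm -> Dm <= ss ->
  lin_achievable ss rs sz rz D
    (2 * sz / (3 - rz) * ln (ss * (1 + Rabs rs) / ((3 - rz) * Dm - ss * (2 - rz - Rabs rs)))
     + 2 * sz * ln (Dm / D)).
Proof.
  intros Hss Hsz Hrs Hrz HD HDm1 HDm2 HDm3.
  destruct (Rabs_bounds _ Hrs) as [[Hrs1 Hrs2] Hrs3].
  destruct (Rabs_bounds _ Hrz) as [[Hrz1 Hrz2] _].
  set (s := if Rle_dec 0 rs then 1 else -1).
  assert (Hs : s * s = 1) by (unfold s; destruct (Rle_dec 0 rs); lra).
  assert (Hsr : s * rs = Rabs rs).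
  { unfold s, Rabs; destruct (Rle_dec 0 rs), (Rcase_abs rs); lra. }
  set (ar := Rabs rs) in *.
  set (U0 := ss * (1 + ar)). set (W0 := ss * (2 - rz - ar)).
  set (Ut := (3 - rz) * Dm - W0).
  assert (HW0 : 0 < W0) by (unfold W0; nra).
  assert (HU0 : 0 < U0) by (unfold U0; nra).
  assert (Hth : D_th ss rs rz = W0 / (2 - rz)) by (unfold D_th, W0, ar; field; lra).
  rewrite Hth in HDm2.
  assert (HW0Dm : W0 <= (2 - rz) * Dm).
  { apply (Rmult_le_compat_l (2 - rz)) in HDm2; [|lra].
    replace ((2 - rz) * (W0 / (2 - rz))) with W0 in HDm2 by (field; lra). exact HDm2. }
  assert (HUt : 0 < Ut) by (unfold Ut; nra).
  assert (HUtU0 : Ut <= U0) by (unfold Ut, U0, W0; nra).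
  set (L1 := ln (U0 / Ut)). set (L2 := ln (Dm / D)).
  assert (HL1 : 0 <= L1).
  { apply ln_nonneg. apply (Rmult_le_reg_r Ut); [lra|]. unfold Rdiv. rewrite Rmult_assoc, Rinv_l; lra. }
  assert (HL2 : 0 <= L2).
  { apply ln_nonneg. apply (Rmult_le_reg_r D); [lra|]. unfold Rdiv. rewrite Rmult_assoc, Rinv_l; lra. }
  intros eps Heps.
  set (K := 4 * L1 / (1 - rz) + 2 * L2 + 3).
  assert (HK : 0 < K).
  { unfold K. assert (0 <= 4 * L1 / (1 - rz)) by (apply div_nonneg; lra). lra. }
  set (t := Rmin 1 (eps / (sz * K))).
  assert (HszK : 0 < sz * K) by nra.
  assert (Ht0 : 0 < t).
  { unfold t, Rmin. destruct (Rle_dec 1 (eps / (sz * K))). lra. apply Rdiv_lt_0_compat; lra. }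
  assert (Ht1 : t <= 1) by apply Rmin_l.
  assert (HtK : t * (sz * K) <= eps).
  { assert (t <= eps / (sz * K)) by apply Rmin_r.
    apply (Rmult_le_compat_r (sz * K)) in H; [|lra].
    replace (eps / (sz * K) * (sz * K)) with eps in H by (field; lra). exact H. }
  set (mu := 2 * t / (1 + t) - t * (1 + rz) / 2).
  assert (Hmu : 0 < mu).
  { unfold mu. replace (2 * t / (1 + t) - t * (1 + rz) / 2) with (t * (4 - (1 + rz) * (1 + t)) / (2 * (1 + t))) by (field; lra).
    apply Rdiv_lt_0_compat; [|lra]. apply Rmult_lt_0_compat; [lra|nra]. }
  destruct (nat_between (L1 / mu)) as [N1 [HN1a HN1b]]. { apply div_nonneg; lra. }
  destruct (nat_between (L2 * (1 + t) / t)) as [N2 [HN2a HN2b]]. { apply div_nonneg; nra. }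
  set (n := (N1 + N2 + N2)%nat).
  assert (Hff : ff t rz ^ N1 <= Ut / U0).
  { eapply Rle_trans. apply pow_incr. split. left; apply ff_pos; lra. apply ff_bound; lra.
    rewrite exp_pow. eapply Rle_trans. apply exp_mono with (y := - L1).
    { apply (Rmult_le_compat_r mu) in HN1a; [|lra].
      replace (L1 / mu * mu) with L1 in HN1a by (field; lra). fold mu. lra. }
    unfold L1. rewrite exp_Ropp, exp_ln. right. field. split; lra. apply Rdiv_lt_0_compat; lra. }
  destruct (phase1 ss rs sz rz t s N1 N2 Hs Ht0 Hsz Hrz2 Hrz1 N1 (le_n _)) as (P1 & P2 & P3).
  { replace (ss + s * (ss * rs)) with U0 by (unfold U0; rewrite <- Hsr; ring). exact HU0. }
  replace (ss + s * (ss * rs)) with U0 in P2 by (unfold U0; rewrite <- Hsr; ring).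
  replace ((2 - rz) * ss - s * (ss * rs)) with W0 in P3 by (unfold W0; rewrite <- Hsr; ring).
  set (V := sV0 (state ss rs sz rz t s N1 N2 N1)) in *.
  assert (HVN1 : V <= Dm).
  { assert (HU : V + s * sC (state ss rs sz rz t s N1 N2 N1) <= Ut).
    { rewrite P2. apply (Rmult_le_compat_l U0) in Hff; [|lra].
      replace (U0 * (Ut / U0)) with Ut in Hff by (field; lra). exact Hff. }
    assert (HDmDm : Ut + W0 = (3 - rz) * Dm) by (unfold Ut; ring).
    apply (Rmult_le_reg_l (3 - rz)); [lra|]. lra. }
  assert (HDm0 : 0 < Dm) by lra.
  assert (Hr : Dm * (/ (1 + t)) ^ N2 <= D).
  { assert ((/ (1 + t)) ^ N2 <= D / Dm).
    { eapply Rle_trans. apply pow_incr. split. left; apply Rinv_0_lt_compat; lra. apply inv_exp_bound; lra.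
      rewrite exp_pow. eapply Rle_trans. apply exp_mono with (y := - L2).
      { apply (Rmult_le_compat_r (t / (1 + t))) in HN2a; [|apply div_nonneg; lra].
        replace (L2 * (1 + t) / t * (t / (1 + t))) with L2 in HN2a by (field; lra). lra. }
      unfold L2. rewrite exp_Ropp, exp_ln. right. field. split; lra. apply Rdiv_lt_0_compat; lra. }
    apply (Rmult_le_compat_l Dm) in H; [|lra].
    replace (Dm * (D / Dm)) with D in H by (field; lra). exact H. }
  destruct (phase2 ss rs sz rz t s N1 N2 Ht0 Hsz N2 Dm (le_n _) HDm0 HVN1) as (Q1 & Q2).
  destruct (phase3 ss rs sz rz t s N1 N2 Ht0 Hsz N2 Dm (le_n _) HDm0) as (R1 & R2).
  { rewrite Q1. fold V. rewrite <- P1. fold V. exact HVN1. }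
  exists 1%nat, n, (acoef ss rs sz rz t s N1 N2), (bcoef ss rs sz rz t s N1 N2), (ccoef ss rs sz rz t s N1 N2).
  split; [lia|]. split.
  - intros i Hi. cbn [rsum]. rewrite Rplus_0_l, INR_1, Rmult_1_l.
    destruct (cov_inv ss rs sz rz t s N1 N2 n (le_n _)) as (C1 & C2 & _).
    destruct i as [|[|i]]; [| |lia].
    + rewrite Shat0_eq, q_Bf. unfold n in *. rewrite C1, R1. lra.
    + rewrite Shat1_eq, q_Bf. unfold n in *. rewrite C2. lra.
  - rewrite (rsum_ext n _ (fun k => Pof (state ss rs sz rz t s N1 N2 k) (pk ss rs sz rz t s N1 N2 k))).
    2:{ intros k Hk. rewrite Xform_eq, q_Bf. apply energy_k. unfold n in *; lia. }
    eapply Rle_trans. apply rsum_le_const. intros k _. apply energy_bound; assumption.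
    unfold n. rewrite !plus_INR.
    assert (A1 : t * INR N1 <= L1 * (2 / (3 - rz)) + L1 * (4 * t / (1 - rz)) + t).
    { assert (t * INR N1 <= L1 * (t / mu) + t).
      { apply (Rmult_le_compat_l t) in HN1b; [|lra].
        replace (t * (L1 / mu + 1)) with (L1 * (t / mu) + t) in HN1b by (field; lra). exact HN1b. }
      assert (Hsl := slope_bound t rz (conj Ht0 Ht1) (conj Hrz1 Hrz2)). fold mu in Hsl.
      apply (Rmult_le_compat_l L1) in Hsl; [|lra]. lra. }
    assert (A2 : t * INR N2 <= L2 + L2 * t + t).
    { apply (Rmult_le_compat_l t) in HN2b; [|lra].
      replace (t * (L2 * (1 + t) / t + 1)) with (L2 + L2 * t + t) in HN2b by (field; lra). exact HN2b. }
    apply (Rmult_le_compat_l sz) in A1; [|lra].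
    apply (Rmult_le_compat_l sz) in A2; [|lra].
    assert (Heq : sz * (L1 * (2 / (3 - rz)) + L1 * (4 * t / (1 - rz)) + t) + 2 * (sz * (L2 + L2 * t + t))
       = 2 * sz / (3 - rz) * L1 + 2 * sz * L2 + t * (sz * K)).
    { unfold K. field. lra. }
    replace ((INR N1 + INR N2 + INR N2) * (t * sz)) with (sz * (t * INR N1) + 2 * (sz * (t * INR N2))) by ring.
    fold U0 W0 Ut L1 L2. rewrite INR_1. lra.
Qed.

Theorem theorem4 (ss rs sz rz D : R)
  (Hss : 0 < ss) (Hsz : 0 < sz) (Hrs : Rabs rs < 1) (Hrz : Rabs rz < 1)
  (HD0 : 0 < D) (HD1 : D <= ss) :
  lin_achievable ss rs sz rz D (E_OL ss rs sz rz D).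
Proof.
  destruct (Rabs_bounds _ Hrs) as [[Hrs1 Hrs2] Hrs3].
  destruct (Rabs_bounds _ Hrz) as [[Hrz1 Hrz2] _].
  unfold E_OL. destruct (Rle_dec (D_th ss rs rz) D) as [H|H].
  - replace (2 * sz / (3 - rz) * ln (ss * (1 + Rabs rs) / (D + (2 - rz) * (D - ss) + ss * Rabs rs)))
      with (2 * sz / (3 - rz) * ln (ss * (1 + Rabs rs) / ((3 - rz) * D - ss * (2 - rz - Rabs rs))) + 2 * sz * ln (D / D)).
    + apply core; auto; lra.
    + replace (D / D) with 1 by (field; lra). rewrite ln_1.
      replace ((3 - rz) * D - ss * (2 - rz - Rabs rs)) with (D + (2 - rz) * (D - ss) + ss * Rabs rs) by ring. ring.
  - assert (Hth : D_th ss rs rz = ss * (2 - rz - Rabs rs) / (2 - rz)) by reflexivity.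
    assert (HW0 : 0 < ss * (2 - rz - Rabs rs)) by nra.
    assert (Hle : D_th ss rs rz <= ss).
    { rewrite Hth. apply (Rmult_le_reg_r (2 - rz)); [lra|].
      replace (ss * (2 - rz - Rabs rs) / (2 - rz) * (2 - rz)) with (ss * (2 - rz - Rabs rs)) by (field; lra). nra. }
    replace (2 * sz * (ln ((2 - rz - Rabs rs) * ss / ((2 - rz) * D)) +
       / (3 - rz) * ln ((2 - rz) * (1 + Rabs rs) / (2 - rz - Rabs rs))))
      with (2 * sz / (3 - rz) * ln (ss * (1 + Rabs rs) / ((3 - rz) * D_th ss rs rz - ss * (2 - rz - Rabs rs)))
            + 2 * sz * ln (D_th ss rs rz / D)).
    + apply core; auto; lra.
    + replace (D_th ss rs rz / D) with ((2 - rz - Rabs rs) * ss / ((2 - rz) * D)) by (rewrite Hth; field; lra).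
      replace (ss * (1 + Rabs rs) / ((3 - rz) * D_th ss rs rz - ss * (2 - rz - Rabs rs)))
        with ((2 - rz) * (1 + Rabs rs) / (2 - rz - Rabs rs)).
      * field. lra.
      * rewrite Hth. field. split; [|lra]. 
        replace ((3 - rz) * (ss * (2 - rz - Rabs rs)) - ss * (2 - rz - Rabs rs) * (2 - rz)) with (ss * (2 - rz - Rabs rs)) by ring.
        lra.
Qed.
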